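(* In the setting described in the context, let $(W^1,W^2)$ be a minimal pair of allocation states and suppose $y\in\mathcal X$ satisfies $W^1_y<\beta_y$. Then $W^1_{xy}=W^2_{xy}$ for all $x\in\mathcal X$.
   Context: $\mathcal X$ is a finite set of units, $\mathcal G=(\mathcal X,\mathcal E)$ a directed graph, $N_x=\{y:(x,y)\in\mathcal E\}$, $\alpha_x,\beta_x$ non-negative integers. An allocation state is a matrix $W\in\mathbb N^{\mathcal X\times\mathcal X}$ with $W_{xy}=0$ whenever $(x,y)\notin\mathcal E$, $W^x:=\sum_yW_{xy}=\alpha_x$ for all $x$, and $W_y:=\sum_xW_{xy}\le\beta_y$ for all $y$; $\mathcal W$ is the set of allocation states and $e_{xy}$ the matrix unit. Let $\mathcal L$ be the graph on $\mathcal W$ in which $W$ and $W'$ are adjacent iff $W'=W-e_{xy}+e_{xy'}$ for some $x$ and some $y\ne y'$ with $W_{xy}>0$, $y'\in N_x$, $W_{y'}<\beta_{y'}$ (these are exactly the positive-rate transitions of the paper's noisy best-response storage dynamics restricted to $\mathcal W$, under its standing assumption that unit activation rates are $\nu_x=\nu\alpha_x$ with $\nu>0$). Write $W\sim W'$ if $W,W'$ are connected by a path in $\mathcal L$. Let $\delta(W^1,W^2)=\sum_{x,y}|W^1_{xy}-W^2_{xy}|$. A pair $(W^1,W^2)$ in $\mathcal W$ is minimal if $\delta(W^1,W^2)\le\delta(W^{1'},W^{2'})$ for all $W^{1'}\sim W^1$ and all $W^{2'}\sim W^2$. *)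

(* Defs.v *)
From mathcomp Require Import all_boot.
From Stdlib Require Import Relations.
Set Implicit Arguments. Unset Strict Implicit. Unset Printing Implicit Defensive.

(* Units X : finType; graph given by edge relation E : rel X (E x y <-> (x,y) in edges).
   Allocation matrices W : X -> X -> nat given as finite functions on X * X. *)
Definition mat (X : finType) := {ffun X * X -> nat}.

Section Alloc.
Variables (X : finType) (E : rel X) (alpha beta : X -> nat).

Definition rowsum (W : mat X) (x : X) : nat := \sum_(y : X) W (x, y).
Definition colsum (W : mat X) (y : X) : nat := \sum_(x : X) W (x, y).

Definition alloc_state (W : mat X) : Prop :=
  (forall x y, ~~ E x y -> W (x, y) = 0) /\
  (forall x, rowsum W x = alpha x) /\
  (forall y, colsum W y <= beta y).

Definition move (W W' : mat X) : Prop :=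
  exists x y y', [/\ y != y', 0 < W (x, y), E x y', colsum W y' < beta y' &
    forall a b, W' (a, b) =
      (W (a, b) - ((a == x) && (b == y)) + ((a == x) && (b == y')))%N].

Definition L_adj (W W' : mat X) : Prop :=
  alloc_state W /\ alloc_state W' /\ (move W W' \/ move W' W).

Definition L_conn : relation (mat X) := clos_refl_trans (mat X) L_adj.

Definition delta (W1 W2 : mat X) : nat :=
  \sum_(p : X * X) (W1 p - W2 p + (W2 p - W1 p))%N.

Definition minimal_pair (W1 W2 : mat X) : Prop :=
  alloc_state W1 /\ alloc_state W2 /\
  forall W1' W2', L_conn W1 W1' -> L_conn W2 W2' ->
    delta W1 W2 <= delta W1' W2'.
End Alloc.

(* Main.v *)
Require Import Defs.
From mathcomp Require Import all_boot.
From mathcomp Require Import zify.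
From Stdlib Require Import Relations.
Set Implicit Arguments. Unset Strict Implicit. Unset Printing Implicit Defensive.

Section Aux.
Variables (X : finType) (E : rel X) (alpha beta : X -> nat).

Definition mv (W : mat X) (x y y' : X) : mat X :=
  [ffun p : X * X => W p - (p == (x, y)) + (p == (x, y'))].

Lemma sum_eq1 (T : finType) (q : T) : \sum_(p : T) ((p == q) : nat) = 1.
Proof.
rewrite (bigD1 q) //= eqxx big1 ?addn0 // => p /negbTE -> //.
Qed.

Lemma sum_row (a x c : X) : \sum_(b : X) (((a, b) == (x, c)) : nat) = (a == x).
Proof.
rewrite (bigD1 c) //= big1 => [|b nb]; first by rewrite xpair_eqE eqxx andbT addn0.
by rewrite xpair_eqE (negbTE nb) andbF.
Qed.

Lemma sum_col (b x c : X) : \sum_(a : X) (((a, b) == (x, c)) : nat) = (b == c).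
Proof.
rewrite (bigD1 x) //= big1 => [|a na]; first by rewrite xpair_eqE eqxx addn0.
by rewrite xpair_eqE (negbTE na).
Qed.

Lemma mvE (W : mat X) (x y y' : X) (p : X * X) : 0 < W (x, y) ->
  mv W x y y' p + (p == (x, y)) = W p + (p == (x, y')).
Proof.
move=> H; rewrite ffunE; case: (eqVneq p (x, y)) => [->|_] /=; lia.
Qed.

Lemma mv_adj (W : mat X) (x y y' : X) : alloc_state E alpha beta W -> y != y' -> 0 < W (x, y) ->
  E x y' -> colsum W y' < beta y' -> L_adj E alpha beta W (mv W x y y').
Proof.
move=> [A1 [A2 A3]] nyy Wp Exy' Hc.
have Hrow a : rowsum (mv W x y y') a + (a == x) = rowsum W a + (a == x).
  have : \sum_(b : X) (mv W x y y' (a, b) + (((a, b) == (x, y)) : nat))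
       = \sum_(b : X) (W (a, b) + (((a, b) == (x, y')) : nat)).
    by apply: eq_bigr => b _; apply: mvE.
  by rewrite !big_split /= !sum_row.
have Hcol b : colsum (mv W x y y') b + (b == y) = colsum W b + (b == y').
  have : \sum_(a : X) (mv W x y y' (a, b) + (((a, b) == (x, y)) : nat))
       = \sum_(a : X) (W (a, b) + (((a, b) == (x, y')) : nat)).
    by apply: eq_bigr => a _; apply: mvE.
  by rewrite !big_split /= !sum_col.
split; first by split.
split; last by left; exists x, y, y'; split => // a b; rewrite ffunE xpair_eqE.
split; [|split].
- move=> a b nE; rewrite ffunE A1 //.
  have -> : ((a, b) == (x, y')) = false.
    by apply/negbTE; apply: contra nE; rewrite xpair_eqE => /andP[/eqP-> /eqP->].
  by rewrite sub0n.
- move=> a; have := Hrow a; rewrite A2; lia.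
- move=> b; have := Hcol b; have := A3 b.
  case: (eqVneq b y') => [->|_].
    by rewrite eq_sym (negbTE nyy) => _; lia.
  lia.
Qed.

Lemma delta_sym (A B : mat X) : delta A B = delta B A.
Proof. by apply: eq_bigr => p _; rewrite addnC. Qed.

Lemma delta_mv (W V : mat X) (x y y' : X) : 0 < W (x, y) -> y != y' ->
  V (x, y) < W (x, y) -> W (x, y') < V (x, y') ->
  delta (mv W x y y') V + 2 = delta W V.
Proof.
move=> Wp nyy H1 H2.
have : \sum_(p : X * X) (mv W x y y' p - V p + (V p - mv W x y y' p)
      + (p == (x, y)) + (p == (x, y')))%N = \sum_(p : X * X) (W p - V p + (V p - W p))%N.
  apply: eq_bigr => p _; rewrite ffunE.
  case: (eqVneq p (x, y)) => [->|n1].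
    have -> : ((x, y) == (x, y')) = false by rewrite xpair_eqE eqxx (negbTE nyy).
  rewrite /=; lia.
  case: (eqVneq p (x, y')) => [->|n2] /=; lia.
rewrite !big_split /= !sum_eq1 /delta !big_split /=; lia.
Qed.

Lemma sum_lt (f g : X -> nat) c : (forall b, f b <= g b) -> f c < g c ->
  \sum_b f b < \sum_b g b.
Proof.
move=> H Hc; rewrite (bigD1 c) //= [X in _ < X](bigD1 c) //=.
have : \sum_(b | b != c) f b <= \sum_(b | b != c) g b by apply: leq_sum => b _; apply: H.
lia.
Qed.

Lemma find_y' (W V : mat X) x y : rowsum W x = rowsum V x -> W (x, y) < V (x, y) ->
  exists y', V (x, y') < W (x, y').
Proof.
move=> Hr Hl; case: (boolP [exists y', V (x, y') < W (x, y')]).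
  by move/existsP.
rewrite negb_exists => /forallP Hf.
have := @sum_lt (fun b => W (x, b)) (fun b => V (x, b)) y.
rewrite /rowsum in Hr; rewrite Hr ltnn => C; exfalso; apply: notF; apply: C => //.
by move=> b; have := Hf b; rewrite -leqNgt.
Qed.

End Aux.

Theorem lemma3 (X : finType) (E : rel X) (alpha beta : X -> nat)
  (W1 W2 : mat X) (y : X) :
  minimal_pair E alpha beta W1 W2 ->
  colsum W1 y < beta y ->
  forall x : X, W1 (x, y) = W2 (x, y).
Proof.
move=> [A1 [A2 Hmin]] Hy x.
have Hr z : rowsum W1 z = rowsum W2 z by rewrite (A1.2.1 z) (A2.2.1 z).
case: (boolP [exists z, W1 (z, y) < W2 (z, y)]).
  move/existsP => [z Hz]; exfalso.
  have [y' Hy'] := find_y' (Hr z) Hz.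
  have nyy : y' != y by apply/eqP => e; subst y'; lia.
  have Ez : E z y.
    case: (boolP (E z y)) => // nE; move: Hz; rewrite A2.1 //.
  have Hp : 0 < W1 (z, y') by lia.
  have Hadj := mv_adj A1 nyy Hp Ez Hy.
  have := Hmin _ W2 (rt_step _ _ _ _ Hadj) (rt_refl _ _ _).
  have := delta_mv Hp nyy Hy' Hz; lia.
rewrite negb_exists => /forallP Hf.
have Hle b : W2 (b, y) <= W1 (b, y) by have := Hf b; rewrite -leqNgt.
case: (ltngtP (W2 (x, y)) (W1 (x, y))) => [Hx|Hx|//]; last by have := Hle x; lia.
exfalso.
have Hc : colsum W2 y < beta y.
  have : colsum W2 y < colsum W1 y.
    exact: (@sum_lt _ (fun b => W2 (b, y)) (fun b => W1 (b, y)) x).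
  lia.
have [y' Hy'] := find_y' (esym (Hr x)) Hx.
have nyy : y' != y by apply/eqP => e; subst y'; lia.
have Ex : E x y.
  case: (boolP (E x y)) => // nE; move: Hx; rewrite A1.1 //.
have Hp : 0 < W2 (x, y') by lia.
have Hadj := mv_adj A2 nyy Hp Ex Hc.
have := Hmin W1 _ (rt_refl _ _ _) (rt_step _ _ _ _ Hadj).
rewrite (delta_sym W1 (mv W2 x y' y)) (delta_sym W1 W2).
have := delta_mv Hp nyy Hy' Hx; lia.
Qed.
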